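(* Consider the disclosure model described in the context. Any full-disclosure policy $d$ is Pareto efficient and satisfies $\Pi(d)\ge\Pi(d')$ for every $d'\in\mathcal{D}$.
   Context: Emissions lie in $E=[0,\bar e]$ with $\bar e>0$. The firm's type $\theta\in\Theta=[\underline\theta,\bar\theta]$ is private information with a continuous density $f=F'$ on $\Theta$. The firm's profit is $\tilde\pi(\theta,e,\tilde e)$ with actual emission $e$ and market-perceived emission $\tilde e$; it is strictly increasing in $e$ and strictly decreasing in $\tilde e$. Standing assumptions: $\tilde\pi$ is continuous on $\Theta\times E\times E$ and $C^2$ on its interior; $\pi(\theta,e):=\tilde\pi(\theta,e,e)$ is strictly concave in $e$; and $\pi(\theta,0)<\pi(\theta,\bar e)$ for all $\theta$. A disclosure policy is a function $d:E\to E$ (a partition of $E$ into level sets). An emission $e$ is belief-compatible under $d$ if $e\ge e'$ whenever $d(e')=d(e)$; $\tilde E_d$ is the set of such levels. The type-$\theta$ firm chooses $e\in\tilde E_d$ maximizing $\pi(\theta,e)$. $\mathcal{D}$ is the set of policies for which the maximum is attained for every type. For $d\in\mathcal{D}$, $\pi_d(\theta)=\max_{e\in\tilde E_d}\pi(\theta,e)$, and $\gamma_d(\theta)$ is the lowest maximizer. Further, $\Pi(d)=\int_\Theta\pi_d\,dF$ and $\Gamma(d)=\int_\Theta\gamma_d\,dF$. A policy $d\in\mathcal{D}$ is Pareto efficient if there is no $d'\in\mathcal{D}$ with $\Pi(d')\ge\Pi(d)$ and $\Gamma(d')\le\Gamma(d)$, at least one inequality strict. Let $\hat{\mathbf e}(\theta):=\arg\max_{e\in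 E}\pi(\theta,e)$. A full-disclosure policy is a policy $d$ such that, for every $e\in\hat{\mathbf e}(\Theta)$, $e$ is alone in its cell: $d(e')=d(e)$ implies $e'=e$. Such a policy belongs to $\mathcal{D}$. *)

(* Defs.v *)
From HB Require Import structures.
From mathcomp Require Import all_boot all_order all_algebra.
From mathcomp Require Import all_classical all_reals all_analysis.
Set Implicit Arguments. Unset Strict Implicit. Unset Printing Implicit Defensive.
Import Order.TTheory GRing.Theory Num.Theory.
Import numFieldNormedType.Exports.
Local Open Scope classical_set_scope.
Local Open Scope ring_scope.

Section Disclosure.
Variable R : realType.

Definition Eset (ebar : R) : set R := `[0, ebar].
Definition Thset (thl thh : R) : set R := `[thl, thh].

Definition pi_diag (pt : R -> R -> R -> R) (th e : R) : R := pt th e e.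

Definition pt3 (pt : R -> R -> R -> R) (p : (R * R) * R) : R := pt p.1.1 p.1.2 p.2.

Definition C2_on (V : normedModType R) (U : set V) (g : V -> R) : Prop :=
  forall u v : V,
    (forall x, U x -> derivable g x u /\ derivable ('D_u g) x v) /\
    {in U, continuous ('D_u g)} /\ {in U, continuous ('D_v ('D_u g))}.

Definition is_policy (ebar : R) (d : R -> R) : Prop :=
  forall e, e \in Eset ebar -> d e \in Eset ebar.

Definition belief_compatible (ebar : R) (d : R -> R) (e : R) : Prop :=
  forall e', e' \in Eset ebar -> d e' = d e -> e' <= e.

Definition Etilde (ebar : R) (d : R -> R) : set R :=
  [set e | e \in Eset ebar /\ belief_compatible ebar d e].

Definition in_Dcal (pt : R -> R -> R -> R) (thl thh ebar : R) (d : R -> R) : Prop :=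
  is_policy ebar d /\
  forall th, th \in Thset thl thh ->
    exists2 e, Etilde ebar d e &
      forall e', Etilde ebar d e' -> pi_diag pt th e' <= pi_diag pt th e.

(* pi_d(theta) = max_{e in tilde E_d} pi(theta, e) (a sup, equal to the max for d in D) *)
Definition pi_d (pt : R -> R -> R -> R) (ebar : R) (d : R -> R) (th : R) : R :=
  sup [set pi_diag pt th e | e in Etilde ebar d].

(* gamma_d(theta) = lowest maximizer (an inf of the maximizers, equal to the
   minimum for d in D) *)
Definition gamma_d (pt : R -> R -> R -> R) (ebar : R) (d : R -> R) (th : R) : R :=
  inf [set e | Etilde ebar d e /\ pi_diag pt th e = pi_d pt ebar d th].

(* Pi(d) = \int pi_d dF and Gamma(d) = \int gamma_d dF, with dF = f dtheta *)
Definition Pi_of (pt : R -> R -> R -> R) (f : R -> R) (thl thh ebar : R)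
    (d : R -> R) : \bar R :=
  (\int[lebesgue_measure]_(t in `[thl, thh]) (pi_d pt ebar d t * f t)%:E)%E.

Definition Gamma_of (pt : R -> R -> R -> R) (f : R -> R) (thl thh ebar : R)
    (d : R -> R) : \bar R :=
  (\int[lebesgue_measure]_(t in `[thl, thh]) (gamma_d pt ebar d t * f t)%:E)%E.

Definition pareto_efficient (pt : R -> R -> R -> R) (f : R -> R) (thl thh ebar : R)
    (d : R -> R) : Prop :=
  in_Dcal pt thl thh ebar d /\
  ~ (exists d', in_Dcal pt thl thh ebar d' /\
       (Pi_of pt f thl thh ebar d <= Pi_of pt f thl thh ebar d')%E /\
       (Gamma_of pt f thl thh ebar d' <= Gamma_of pt f thl thh ebar d)%E /\
       ((Pi_of pt f thl thh ebar d < Pi_of pt f thl thh ebar d')%E \/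
        (Gamma_of pt f thl thh ebar d' < Gamma_of pt f thl thh ebar d)%E)).

Definition in_hat_image (pt : R -> R -> R -> R) (thl thh ebar : R) (e : R) : Prop :=
  exists2 th, th \in Thset thl thh &
    e \in Eset ebar /\ forall e', e' \in Eset ebar -> pi_diag pt th e' <= pi_diag pt th e.

Definition full_disclosure (pt : R -> R -> R -> R) (thl thh ebar : R) (d : R -> R) : Prop :=
  is_policy ebar d /\
  forall e, in_hat_image pt thl thh ebar e ->
    forall e', e' \in Eset ebar -> d e' = d e -> e' = e.

End Disclosure.

(* Main.v *)
Require Import Defs.
From HB Require Import structures.
From mathcomp Require Import all_boot all_order all_algebra.
From mathcomp Require Import all_classical all_reals all_analysis.
From mathcomp Require Import measurable_realfun.
Import Order.TTheory GRing.Theory Num.Theory.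
Import numFieldNormedType.Exports.
Local Open Scope classical_set_scope.
Local Open Scope ring_scope.

From mathcomp Require Import lra.
Import HBNNSimple.
Lemma within_comp (R : realType) (S : set ((R * R) * R)) (F : (R * R) * R -> R)
  (h : R -> (R * R) * R) (x0 : R) :
  {within S, continuous F} -> S (h x0) -> {for x0, continuous h} ->
  forall eps, 0 < eps -> \forall y \near x0, S (h y) -> `|F (h x0) - F (h y)| < eps.
Proof.
move=> cF Sx0 ch eps e0.
move: cF; rewrite continuous_subspace_in => /(_ (h x0)).
rewrite inE => /(_ Sx0).
rewrite /continuous_at /=.
move/cvgrPdist_lt => /(_ eps e0) H.
have : within S (nbhs (h x0)) (fun y => `|F (h x0) - F y| < eps).
  by rewrite (nbhs_subspace_in Sx0).
rewrite /within /= => H2; exact: ch H2.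
Qed.

Lemma lsc_meas (R : realType) (D : set R) (g : R -> R) : measurable D ->
  (forall x a, D x -> a < g x -> exists2 r : R, 0 < r &
     forall y, D y -> `|x - y| < r -> a < g y) ->
  measurable_fun D g.
Proof.
move=> mD H; apply: (measurability _ (RGenOInfty.measurableE R)) => //.
move=> /= _ [_ [a ->] <-].
pose I := [set xr : R * R | 0 < xr.2 /\
   forall z, D z -> `|xr.1 - z| < xr.2 -> a < g z].
pose V := \bigcup_(i in I) ball i.1 i.2.
have oV : open V by apply: bigcup_open => i _; exact: ball_open.
have -> : D `&` g @^-1` `]a, +oo[ = D `&` V.
  apply/seteqP; split => x [Dx].
    rewrite /= in_itv /= andbT => ax.
    have [r r0 Hr] := H x a Dx ax.
    split => //; exists (x, r) => //=.
    by rewrite /ball /= subrr normr0.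
  move=> [[y r] [/= r0 Hr] /= bxy].
  split => //=; rewrite in_itv /= andbT; exact: Hr.
by apply: measurableI => //; exact: open_measurable.
Qed.
Lemma KL d (T : measurableType d) (R : realType) (mu : {measure set T -> \bar R})
  (D N : set T) (g1 g2 : T -> \bar R) :
  measurable D -> measurable N -> (mu N = 0)%E ->
  (forall x, D x -> 0 <= g1 x)%E -> (forall x, D x -> 0 <= g2 x)%E ->
  (forall x, D x -> ~ N x -> g2 x <= g1 x)%E ->
  (\int[mu]_(x in D) g2 x <= \int[mu]_(x in D) g1 x)%E.
Proof.
move=> mD mN N0 g10 g20 H.
rewrite (ge0_integralE mu g20) (ge0_integralE mu g10) /=.
apply: ge_ereal_sup => _ [h /= hle <-].
have mNc : measurable (~` N) by apply: measurableC.
pose h' := mul_nnsfun h (@indic_nnsfun _ _ R (~` N) mNc).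
have h'E x : h' x = h x * (x \in ~` N)%:R.
  by rewrite /h' /= mindicE.
apply: (@le_trans _ _ (sintegral mu h')).
  rewrite -!integralT_nnsfun.
  rewrite (ge0_negligible_integral mN) //=; last first.
  - by move=> x _; rewrite lee_fin.
  - by apply/measurable_EFinP; exact: measurable_funS (measurable_funPT h).
  rewrite integral_mkcond le_eqVlt; apply/orP; left; apply/eqP.
  apply: eq_integral => x _; rewrite mindicE patchE.
  case: ifPn => [/set_mem [_ nN]|xN].
    by rewrite (_ : x \in ~` N) ?mulr1 //; exact/mem_set.
  rewrite (_ : x \in ~` N = false) ?mulr0 //.
  apply/negbTE; apply: contra xN => /set_mem nN; exact/mem_set.
apply: ereal_sup_ubound; exists h' => //= x.
rewrite /= mindicE.
have g1D0 : (0 <= (g1 \_ D) x)%E by rewrite patchE; case: ifPn => // /set_mem /g10.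
case: (boolP (x \in ~` N)) => [/set_mem nN|_]; last by rewrite mulr0.
rewrite mulr1; apply: (le_trans (hle x)).
rewrite !patchE; case: ifPn => // /set_mem Dx; exact: H.
Qed.

Lemma sup_attained (R : realType) (A : set R) (a : R) :
  A a -> (forall x, A x -> x <= a) -> sup A = a.
Proof.
move=> Aa ub; apply/le_anti/andP; split.
  by apply: ge_sup; [exists a | exact: ub].
by apply: sup_upper_bound => //; split; [exists a | exists a; exact: ub].
Qed.

Lemma pid_eq (R : realType) (pt : R -> R -> R -> R) ebar d th e :
  Etilde ebar d e ->
  (forall e', Etilde ebar d e' -> pi_diag pt th e' <= pi_diag pt th e) ->
  pi_d pt ebar d th = pi_diag pt th e.
Proof.
move=> He Hm; rewrite /pi_d; apply: sup_attained; first by exists e.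
by move=> _ [e' He' <-]; exact: Hm.
Qed.

Lemma memI (R : realType) (a b x : R) : (x \in `[a, b]%classic) = (a <= x <= b).
Proof. by apply/idP/idP; rewrite in_setE /= in_itv. Qed.

Theorem proposition3 (R : realType) (ebar thl thh : R)
  (f : R -> R) (pt : R -> R -> R -> R) :
  0 < ebar ->
  thl < thh ->
  (* f is a continuous density on Theta *)
  {within Thset thl thh, continuous f} ->
  (forall t, t \in Thset thl thh -> 0 <= f t) ->
  (\int[lebesgue_measure]_(t in Thset thl thh) (f t)%:E)%E = 1%E ->
  (* pi~ continuous on Theta x E x E *)
  {within [set p : (R * R) * R | p.1.1 \in Thset thl thh /\ p.1.2 \in Eset ebar
                                 /\ p.2 \in Eset ebar], continuous (pt3 pt)} ->
  (* pi~ is C^2 on the interior of Theta x E x E *)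
  C2_on [set p : (R * R) * R | p.1.1 \in `]thl, thh[%classic /\ p.1.2 \in `]0, ebar[%classic
                               /\ p.2 \in `]0, ebar[%classic ] (pt3 pt) ->
  (* pi~ strictly increasing in e, strictly decreasing in e~ *)
  (forall th et e1 e2, th \in Thset thl thh -> et \in Eset ebar ->
     e1 \in Eset ebar -> e2 \in Eset ebar -> e1 < e2 -> pt th e1 et < pt th e2 et) ->
  (forall th e et1 et2, th \in Thset thl thh -> e \in Eset ebar ->
     et1 \in Eset ebar -> et2 \in Eset ebar -> et1 < et2 -> pt th e et2 < pt th e et1) ->
  (* pi(theta, .) strictly concave on E *)
  (forall th e1 e2 (l : R), th \in Thset thl thh -> e1 \in Eset ebar -> e2 \in Eset ebar ->
     e1 != e2 -> 0 < l < 1 ->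
     l * pi_diag pt th e1 + (1 - l) * pi_diag pt th e2
       < pi_diag pt th (l * e1 + (1 - l) * e2)) ->
  (* pi(theta, 0) < pi(theta, ebar) *)
  (forall th, th \in Thset thl thh -> pi_diag pt th 0 < pi_diag pt th ebar) ->
  forall d : R -> R, full_disclosure pt thl thh ebar d ->
    pareto_efficient pt f thl thh ebar d /\
    (forall d', in_Dcal pt thl thh ebar d' ->
       (Pi_of pt f thl thh ebar d' <= Pi_of pt f thl thh ebar d)%E).
Proof.
move=> ebar0 thlh cf f0 f1 cpt _ incr decr conc endp d [pold Hfd].
have Sx th e : th \in Thset thl thh -> e \in Eset ebar ->
  [set p : (R * R) * R | p.1.1 \in Thset thl thh /\ p.1.2 \in Eset ebar
                                 /\ p.2 \in Eset ebar] ((th, e), e) by [].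
have cont_e th : th \in Thset thl thh ->
    {within `[0, ebar], continuous (pi_diag pt th)}.
  move=> Th; rewrite continuous_subspace_in => e Ee.
  rewrite /continuous_at; apply/cvgrPdist_lt => eps e0.
  have W : within `[0, ebar] (nbhs e)
      (fun y => `|pi_diag pt th e - pi_diag pt th y| < eps).
    have := @within_comp R _ _ (fun y => ((th, y), y)) e cpt (Sx _ _ Th Ee) _ eps e0.
    move=> /(_ (cvg_pair (cvg_pair (cvg_cst th) cvg_id) cvg_id)).
    rewrite /within; apply: filterS => y H Ey; apply: H; apply: Sx => //.
    exact: mem_set.
  move: W; rewrite (nbhs_subspace_in (set_mem Ee)); exact.
have cont_th e th0 a : e \in Eset ebar -> th0 \in Thset thl thh ->
    a < pi_diag pt th0 e ->
    exists2 r : R, 0 < r & forall y, Thset thl thh y -> `|th0 - y| < r ->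
      a < pi_diag pt y e.
  move=> Ee Th0 ath0.
  have ea : 0 < pi_diag pt th0 e - a by rewrite subr_gt0.
  have := @within_comp R _ _ (fun y => ((y, e), e)) th0 cpt (Sx _ _ Th0 Ee) _ _ ea.
  move=> /(_ (cvg_pair (cvg_pair cvg_id (cvg_cst e)) (cvg_cst e))).
  move/nbhs_ballP => [r r0 Hr]; exists r => // y Thy ry.
  have := Hr y ry (Sx _ _ (mem_set Thy) Ee) => /=.
  move=> H; have := ler_norm (pi_diag pt th0 e - pi_diag pt y e).
  rewrite /pi_diag /= in H *; lra.
have [C HC] : exists C, forall th e, th \in Thset thl thh -> e \in Eset ebar ->
    `|pi_diag pt th e| <= C.
  have cS : compact [set p : (R * R) * R | p.1.1 \in Thset thl thh /\
      p.1.2 \in Eset ebar /\ p.2 \in Eset ebar].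
    have -> : [set p : (R * R) * R | p.1.1 \in Thset thl thh /\
      p.1.2 \in Eset ebar /\ p.2 \in Eset ebar] =
      (`[thl, thh] `*` `[0, ebar]) `*` `[0, ebar].
      apply/seteqP; split => -[[a b] c] /=.
        by rewrite /Thset /Eset !in_setE => -[? [? ?]].
      by rewrite /Thset /Eset !in_setE => -[[? ?] ?].
    by apply: compact_setX; [apply: compact_setX|]; exact: segment_compact.
  have := compact_bounded (continuous_compact cpt cS).
  case=> M [_ HM]; exists (M + 1) => th e Th Ee.
  have : M < M + 1 by rewrite ltrDl.
  move/HM => H; apply: (H (pt3 pt ((th, e), e))); exists ((th, e), e) => //.
have hat th : th \in Thset thl thh -> exists2 e, e \in Eset ebar &
    forall e', e' \in Eset ebar -> pi_diag pt th e' <= pi_diag pt th e.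
  move=> Th; have [e Ee Hm] := EVT_max (ltW ebar0) (cont_e th Th).
  exists e; first by move: Ee; rewrite /Eset memI in_itv.
  by move=> e' Ee'; apply: Hm; move: Ee'; rewrite /Eset memI in_itv.
have hatEt th e : th \in Thset thl thh -> e \in Eset ebar ->
    (forall e', e' \in Eset ebar -> pi_diag pt th e' <= pi_diag pt th e) ->
    Etilde ebar d e.
  move=> Th Ee Hmax; split => // e' Ee' de'.
  by rewrite (Hfd e _ e' Ee' de') //; exists th.
have dDcal : in_Dcal pt thl thh ebar d.
  split => // th Th; have [e Ee Hm] := hat th Th.
  by exists e; [exact: hatEt Hm | move=> e' [Ee' _]; exact: Hm].
have piD d'' th : in_Dcal pt thl thh ebar d'' -> th \in Thset thl thh ->
    exists2 e, Etilde ebar d'' e & pi_d pt ebar d'' th = pi_diag pt th e /\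
      forall e', Etilde ebar d'' e' -> pi_diag pt th e' <= pi_diag pt th e.
  move=> [_ H] Th; have [e He Hm] := H th Th; exists e => //; split => //.
  exact: pid_eq.
have Mmax th e : th \in Thset thl thh -> e \in Eset ebar ->
    pi_diag pt th e <= pi_d pt ebar d th.
  move=> Th Ee; have [e0 He0 [-> Hm]] := piD d th dDcal Th.
  have [h Eh Hh] := hat th Th.
  exact: le_trans (Hh e Ee) (Hm h (hatEt th h Th Eh Hh)).
have Ple d'' th : in_Dcal pt thl thh ebar d'' -> th \in Thset thl thh ->
    pi_d pt ebar d'' th <= pi_d pt ebar d th.
  move=> Dd Th; have [e [Ee _] [-> _]] := piD d'' th Dd Th; exact: Mmax.
have Pbnd d'' th : in_Dcal pt thl thh ebar d'' -> th \in Thset thl thh ->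
    `|pi_d pt ebar d'' th| <= C.
  move=> Dd Th; have [e [Ee _] [-> _]] := piD d'' th Dd Th; exact: HC.
have lsc d'' : in_Dcal pt thl thh ebar d'' -> forall th0 a,
    Thset thl thh th0 -> a < pi_d pt ebar d'' th0 ->
    exists2 r : R, 0 < r & forall y, Thset thl thh y -> `|th0 - y| < r ->
      a < pi_d pt ebar d'' y.
  move=> Dd th0 a Th0; have [e [Ee He] [-> _]] := piD d'' th0 Dd (mem_set Th0).
  move=> ath0; have [r r0 Hr] := cont_th e th0 a Ee (mem_set Th0) ath0.
  exists r => // y Thy ry.
  have [ey _ [-> Hy]] := piD d'' y Dd (mem_set Thy).
  exact: lt_le_trans (Hr y Thy ry) (Hy e (conj Ee He)).
have mTh : measurable (Thset thl thh) by exact: measurable_itv.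
have meas d'' : in_Dcal pt thl thh ebar d'' ->
    measurable_fun (Thset thl thh) (pi_d pt ebar d'').
  move=> Dd; apply: lsc_meas => //; exact: lsc.
have gam0 d'' th : in_Dcal pt thl thh ebar d'' -> th \in Thset thl thh ->
    0 <= gamma_d pt ebar d'' th.
  move=> Dd Th; rewrite /gamma_d; apply: lb_le_inf.
    by have [e He [-> _]] := piD d'' th Dd Th; exists e.
  by move=> x [[Ex _] _]; move: Ex; rewrite /Eset memI => /andP[].
have gamle d'' th : in_Dcal pt thl thh ebar d'' -> th \in Thset thl thh ->
    pi_d pt ebar d'' th = pi_d pt ebar d th ->
    gamma_d pt ebar d th <= gamma_d pt ebar d'' th.
  move=> Dd Th Peq; rewrite /gamma_d; apply: lb_le_inf.
    by have [e He [-> _]] := piD d'' th Dd Th; exists e.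
  move=> x [[Ex Bx] px]; apply: ge_inf.
    by exists 0 => y [[Ey _] _]; move: Ey; rewrite /Eset memI => /andP[].
  split; last by rewrite px.
  apply: (hatEt th) => // e' Ee'; rewrite px Peq; exact: Mmax.
pose mu := (@lebesgue_measure R).
have intf : mu.-integrable (Thset thl thh) (EFin \o f).
  have := @continuous_compact_integrable R f `[thl, thh] (@segment_compact R thl thh) cf.
  exact.
have mf : measurable_fun (Thset thl thh) f.
  exact: subspace_continuous_measurable_fun mTh cf.
have intPi d'' : in_Dcal pt thl thh ebar d'' ->
    mu.-integrable (Thset thl thh) (fun t => (pi_d pt ebar d'' t * f t)%:E).
  move=> Dd; have bnd : [bounded pi_d pt ebar d'' x | x in Thset thl thh].
    exists C; split; first exact: num_real.
    move=> M CM x Thx; exact: le_trans (Pbnd _ _ Dd (mem_set Thx)) (ltW CM).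
  have := @integrableMl _ _ R mu (Thset thl thh) mTh (EFin \o f) (pi_d pt ebar d'') intf (meas d'' Dd) bnd.
  by apply: eq_integrable => // t _; rewrite /= -EFinM mulrC.
have part2 d' : in_Dcal pt thl thh ebar d' ->
    (Pi_of pt f thl thh ebar d' <= Pi_of pt f thl thh ebar d)%E.
  move=> Dd; apply: le_integral => //; [exact: intPi|exact: intPi|].
  move=> t Tht; rewrite lee_fin; apply: ler_wpM2r; [exact: f0|exact: Ple].
split; last exact: part2.
split => //.
move=> [d' [Dd [Pile [Gale Hor]]]].
have Pieq : Pi_of pt f thl thh ebar d' = Pi_of pt f thl thh ebar d.
  by apply/le_anti; rewrite Pile part2.
have Gale2 : (Gamma_of pt f thl thh ebar d <= Gamma_of pt f thl thh ebar d')%E.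
  pose g t := pi_d pt ebar d t * f t - pi_d pt ebar d' t * f t.
  have int0 : (\int[mu]_(t in Thset thl thh) (g t)%:E = 0)%E.
    rewrite (@eq_integral _ _ _ mu (Thset thl thh) (fun t => (pi_d pt ebar d t * f t)%:E
       - (pi_d pt ebar d' t * f t)%:E)%E); last by move=> t _; rewrite EFinB.
    rewrite (@integralB_EFin _ _ R mu (Thset thl thh) (fun t => pi_d pt ebar d t * f t) (fun t => pi_d pt ebar d' t * f t) mTh (intPi d dDcal) (intPi d' Dd)).
    have := Pieq; rewrite /Pi_of => ->; rewrite subee //.
    exact: integrable_fin_num (intPi d dDcal).
  have g0 t : Thset thl thh t -> 0 <= g t.
    move=> Tht; rewrite /g subr_ge0; apply: ler_wpM2r;
      [exact: f0 (mem_set Tht)|exact: Ple (mem_set Tht)].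
  have mg : measurable_fun (Thset thl thh) (fun t => (g t)%:E).
    apply/measurable_EFinP; apply: measurable_funB;
      apply: measurable_funM => //; exact: meas.
  have : ae_eq mu (Thset thl thh) (fun t => (g t)%:E) (cst 0%E).
    apply/(ae_eq_integral_abs mu mTh mg); rewrite -[RHS]int0.
    apply: eq_integral => t /set_mem Tht; rewrite gee0_abs // lee_fin; exact: g0.
  case=> N [mN N0 HN].
  apply: (@KL _ _ R mu (Thset thl thh) N (fun t => (gamma_d pt ebar d' t * f t)%:E) (fun t => (gamma_d pt ebar d t * f t)%:E) mTh mN N0).
  - move=> t Tht; rewrite lee_fin; apply: mulr_ge0;
      [exact: gam0 (mem_set Tht)|exact: f0 (mem_set Tht)].
  - move=> t Tht; rewrite lee_fin; apply: mulr_ge0;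
      [exact: gam0 (mem_set Tht)|exact: f0 (mem_set Tht)].
  move=> t Tht Nt.
  have gt0 : g t = 0.
    apply: contrapT => gne; apply: Nt; apply: HN => /= H; apply: gne.
    by have := H Tht; case.
  have [ft0|ftn0] := eqVneq (f t) 0; first by rewrite ft0 !mulr0.
  rewrite lee_fin; apply: ler_wpM2r; first exact: f0 (mem_set Tht).
  apply: gamle => //; first exact: mem_set.
  move: gt0; rewrite /g -mulrBl => /eqP; rewrite mulf_eq0 (negbTE ftn0) orbF.
  by rewrite subr_eq0 => /eqP ->.
case: Hor => H.
  by move: H; rewrite Pieq ltxx.
by move: (lt_le_trans H Gale2); rewrite ltxx.
Qed.
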